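(* Let $0\le r\le m$ and let $\mathbf v_r\in\mathrm{GF}(q^m)^r$ have rank $r$. The rank weight enumerator of $\mathcal L_r=\langle\mathbf v_r\rangle^\perp\subseteq\mathrm{GF}(q^m)^r$ depends only on $r$ and equals $$W^{\mathrm R}_{\mathcal L_r}(x,y)=q^{-m}\left\{\big[x+(q^m-1)y\big]^{[r]}+(q^m-1)(x-y)^{[r]}\right\}.$$
   Context: The rank of a vector over $\mathrm{GF}(q^m)$ is the maximum number of its coordinates linearly independent over $\mathrm{GF}(q)$. $\langle\mathbf v\rangle=\{a\mathbf v:a\in\mathrm{GF}(q^m)\}$ and $\perp$ denotes the dual with respect to the standard inner product $\sum_iu_iv_i$. The rank weight enumerator of a code $\mathcal C\subseteq\mathrm{GF}(q^m)^N$ is $\sum_{\mathbf u\in\mathcal C}y^{\mathrm{rk}(\mathbf u)}x^{N-\mathrm{rk}(\mathbf u)}$. $q$-product: for homogeneous polynomials $a(x,y;m)=\sum_{i=0}^r a_i(m)y^ix^{r-i}$ and $b(x,y;m)=\sum_{j=0}^s b_j(m)y^jx^{s-j}$ with coefficients real functions of $m$ (out-of-range coefficients zero), $a*b=\sum_{u=0}^{r+s}c_u(m)y^ux^{r+s-u}$ with $c_u(m)=\sum_{i=0}^u q^{is}a_i(m)b_{u-i}(m-i)$; $q$-powers: $a^{[0]}=1$, $a^{[n]}=a^{[n-1]}*a$. The polynomial $x+(q^m-1)y$ has coefficients $1$ and $q^m-1$, and $x-y$ has coefficients $1,-1$. *)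

(* Defs.v *)
From HB Require Import structures.
From mathcomp Require Import all_boot all_order all_algebra all_field.
Set Implicit Arguments. Unset Strict Implicit. Unset Printing Implicit Defensive.
Import Order.TTheory GRing.Theory Num.Theory.
Local Open Scope ring_scope.

(* GF(q^m) is modelled as a field extension L of the finite field F = GF(q);
   finvect_type L is L equipped with its canonical finType structure. *)
Notation GF L := (finvect_type L).

Section Rank.
Variables (F : finFieldType) (L : fieldExtType F).

Definition rk (r : nat) (u : 'rV[GF L]_r) : nat :=
  \max_(S : {set 'I_r} | free [seq u 0 i | i in S]) #|S|.

Definition dual_line (r : nat) (v : 'rV[GF L]_r) : {set 'rV[GF L]_r} :=
  [set u : 'rV[GF L]_r | \sum_(i < r) u 0 i * v 0 i == 0].

(* coefficient of y^i x^(r-i) in the rank weight enumerator of C *)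
Definition rwe_coef (r : nat) (C : {set 'rV[GF L]_r}) (i : nat) : nat :=
  #|[set u in C | rk u == i]|.
End Rank.

(* Homogeneous polynomials sum_{i=0}^d a_i(m) y^i x^(d-i), with coefficients
   functions of m (m ranges over integers, values rational). *)
Record hpoly := HPoly { hdeg : nat; hcoef : nat -> int -> rat }.

Definition coef (a : hpoly) (i : nat) (m : int) : rat :=
  if (i <= hdeg a)%N then hcoef a i m else 0.

Definition qprod (q : nat) (a b : hpoly) : hpoly :=
  HPoly (hdeg a + hdeg b)
    (fun u m => \sum_(i < u.+1)
        (q%:Q) ^+ (i * hdeg b) * coef a i m * coef b (u - i) (m - (i%:Z))).

Definition hone : hpoly := HPoly 0 (fun _ _ => 1).

Fixpoint qpow (q : nat) (a : hpoly) (n : nat) : hpoly :=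
  match n with
  | 0 => hone
  | n.+1 => qprod q (qpow q a n) a
  end.

(* x + (q^m - 1) y *)
Definition hlin1 (q : nat) : hpoly :=
  HPoly 1 (fun i m => if i == 0%N then 1 else (q%:Q) ^ m - 1).

(* x - y *)
Definition hlin2 : hpoly := HPoly 1 (fun i _ => if i == 0%N then 1 else -1).

(* Main.v *)
Require Import Defs.
From HB Require Import structures.
From mathcomp Require Import all_boot all_order all_algebra all_field.
From mathcomp Require Import ring zify.
Set Implicit Arguments. Unset Strict Implicit. Unset Printing Implicit Defensive.
Import Order.TTheory GRing.Theory Num.Theory.
Local Open Scope ring_scope.
Lemma hdeg_qpow q a r : hdeg a = 1%N -> hdeg (qpow q a r) = r.
Proof. by move=> ha; elim: r => //= r ->; rewrite ha addn1. Qed.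

Lemma coef_big a i m : (hdeg a < i)%N -> coef a i m = 0.
Proof. by move=> h; rewrite /coef leqNgt h. Qed.

Lemma coef_qprod1 q P a u m : hdeg a = 1%N ->
  coef (qprod q P a) u m =
    (q%:Q) ^+ u * coef P u m * coef a 0 (m - u%:Z)
    + (if u is j.+1 then (q%:Q) ^+ j * coef P j m * coef a 1 (m - j%:Z) else 0).
Proof.
move=> ha; rewrite {1}/coef /= ha.
case: leqP => hu.
  rewrite big_ord_recr /= muln1 subnn addrC; congr (_ + _).
  case: u hu => [|u] hu; first by rewrite big_ord0.
  rewrite big_ord_recr /= muln1 subSnn big1 ?add0r //.
  move=> i _; rewrite (@coef_big a) ?mulr0 // ha.
  case: i => i /= hi; lia.
rewrite (@coef_big P u) ?mulr0 ?mul0r ?add0r; last by lia.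
case: u hu => [|u] hu //.
by rewrite (@coef_big P u) ?mulr0 ?mul0r //; lia.
Qed.

Lemma coef_qpow0 q a u m : coef (qpow q a 0) u m = (u == 0)%:R.
Proof. by rewrite /coef /=; case: u. Qed.

Lemma Nf_rec q r u (m : int) : (0 < q)%N ->
  coef (qpow q (hlin1 q) r.+1) u m =
    (q%:Q) ^+ u * coef (qpow q (hlin1 q) r) u m
    + (if u is j.+1 then ((q%:Q) ^ m - (q%:Q) ^+ j) * coef (qpow q (hlin1 q) r) j m else 0).
Proof.
move=> q0 /=; rewrite coef_qprod1 //; congr (_ + _).
  by rewrite /coef /= mulr1.
case: u => // j; rewrite /coef /= mulrAC; congr (_ * _).
have qn0 : (q%:Q) != 0 by rewrite pnatr_eq0 -lt0n.
by rewrite mulrBr mulr1 exprnP -expfzDr // subrKC.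
Qed.

Lemma Df_rec q r u (m : int) :
  coef (qpow q hlin2 r.+1) u m =
    (q%:Q) ^+ u * coef (qpow q hlin2 r) u m
    - (if u is j.+1 then (q%:Q) ^+ j * coef (qpow q hlin2 r) j m else 0).
Proof.
rewrite /= coef_qprod1 //; congr (_ + _).
  by rewrite /coef /= mulr1.
by case: u => [|j]; rewrite ?oppr0 // /coef /= mulrN1.
Qed.

Section Main.
Variables (F : finFieldType) (L : fieldExtType F).
Local Notation T := (GF L).

Definition sp r (u : 'rV[T]_r) : {vspace T} := (\sum_(i < r) <[u 0%R i]>)%VS.

Lemma dim_addl (x : T) (U : {vspace T}) :
  \dim (<[x]> + U)%VS = (\dim U + (x \notin U))%N.
Proof.
case: (boolP (x \in U)) => xU /=.
  by rewrite addn0; congr (\dim _); apply/addv_idPr; rewrite -memvE.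
rewrite addnC dimv_disjoint_sum ?dim_vline; last first.
  apply/eqP; rewrite -subv0; apply/subvP => y /memv_capP [/vlineP [k ->] kxU].
  rewrite memv0; case: (eqVneq k 0) => [->|k0]; first by rewrite scale0r.
  by move: kxU; rewrite rpredZeq (negbTE k0) (negbTE xU).
by congr (_ + _)%N; case: eqP xU => // ->; rewrite mem0v.
Qed.

Lemma rkE r (u : 'rV[T]_r) : rk u = \dim (sp u).
Proof.
have spanS (S : {set 'I_r}) : <<[seq u 0%R i | i in S]>>%VS = (\sum_(i in S) <[u 0%R i]>)%VS.
  by rewrite span_def big_map big_enum.
have freeS (S : {set 'I_r}) : free [seq u 0%R i | i in S] = (\dim (\sum_(i in S) <[u 0%R i]>)%VS == #|S|).
  by rewrite /free spanS size_image.
have subS (S : {set 'I_r}) : (\sum_(i in S) <[u 0%R i]> <= sp u)%VS.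
  by apply/subv_sumP => i _; exact: (sumv_sup i).
have ne : (0 < #|(fun S : {set 'I_r} => free [seq u 0%R i | i in S])|)%N.
  by apply/card_gt0P; exists set0; rewrite /= unfold_in freeS big_pred0 ?dimv0 ?cards0 // => i; rewrite inE.
rewrite /rk; have [S0 fS0 eS0] := eq_bigmax_cond (fun S : {set 'I_r} => #|S|) ne.
rewrite eS0; apply/eqP; rewrite eqn_leq; apply/andP; split.
  by move: fS0; rewrite unfold_in freeS => /eqP <-; apply: dimvS.
move: fS0; rewrite unfold_in freeS => /eqP dS0; rewrite -dS0; apply: dimvS.
apply/subv_sumP => j _; rewrite -memvE.
apply/negPn/negP => nj.
have jS0 : j \notin S0.
  by apply/negP => jS; move/negP: nj; apply; rewrite memvE; apply: (sumv_sup j) => //; rewrite -memvE memv_line.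
have : free [seq u 0%R i | i in j |: S0].
  rewrite freeS (bigD1 j) ?setU11 //=.
  rewrite (eq_bigl (fun i => i \in S0)); last first.
    by move=> i; rewrite !inE; case: (eqVneq i j) => [->|] /=; rewrite ?andbF ?andbT ?(negbTE jS0).
  by rewrite dim_addl nj dS0 cardsU1 jS0 addnC.
move=> H; have := @leq_bigmax_cond _ (fun S : {set 'I_r} => free [seq u 0%R i | i in S]) (fun S => #|S|) (j |: S0) H.
by rewrite eS0 cardsU1 jS0 ltnn.
Qed.

Definition tl (A : Type) r (u : 'M[A]_(1, r.+1)) : 'M[A]_(1, r) := \row_k u 0%R (lift ord0 k).
Definition cns (A : Type) r (t : A) (u : 'M[A]_(1, r)) : 'M[A]_(1, r.+1) :=
  \row_j (if unlift ord0 j is Some k then u 0%R k else t).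

Lemma cns0 (A : Type) r t (u : 'M[A]_(1, r)) : cns t u 0%R ord0 = t.
Proof. by rewrite mxE unlift_none. Qed.
Lemma tl_cns (A : Type) r t (u : 'M[A]_(1, r)) : tl (cns t u) = u.
Proof. by apply/rowP => k; rewrite !mxE liftK. Qed.
Lemma cns_tl (A : Type) r (u : 'M[A]_(1, r.+1)) : cns (u 0%R ord0) (tl u) = u.
Proof.
apply/rowP => j; rewrite !mxE; case: unliftP => [k ->|->]; rewrite ?mxE //.
Qed.

Lemma card_split (A : finType) r (P : A -> 'M[A]_(1, r) -> bool) :
  #|[set u : 'M[A]_(1, r.+1) | P (u 0%R ord0) (tl u)]| =
  (\sum_(w : 'M[A]_(1, r)) #|[set t : A | P t w]|)%N.
Proof.
rewrite -sum1_card big_mkcond /=.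
rewrite (reindex (fun x : A * 'M[A]_(1, r) => cns x.1 x.2)) /=; last first.
  by exists (fun u : 'M[A]_(1, r.+1) => (u 0%R ord0, tl u)) => [[t w] _|u _] /=; rewrite ?cns0 ?tl_cns ?cns_tl.
rewrite -(pair_big xpredT xpredT (fun t w => if cns t w \in [set u : 'M[A]_(1, r.+1) | P (u 0%R ord0) (tl u)] then 1%N else 0%N)) /=.
rewrite exchange_big /=; apply: eq_big => // w _.
rewrite -sum1_card [RHS]big_mkcond /=; apply: eq_bigr => t _.
by rewrite !inE cns0 tl_cns.
Qed.

Lemma sum_card_swap (A B : finType) (P : A -> B -> bool) :
  (\sum_a #|[set b | P a b]| = \sum_b #|[set a | P a b]|)%N.
Proof.
under eq_bigr => a _ do rewrite -sum1_card big_mkcond /=.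
rewrite exchange_big /=; apply: eq_bigr => b _.
rewrite -sum1_card [RHS]big_mkcond /=; apply: eq_bigr => a _.
by rewrite !inE.
Qed.

Lemma sp_tl r (u : 'rV[T]_r.+1) : sp u = (<[u 0%R ord0]> + sp (tl u))%VS.
Proof. by rewrite /sp big_ord_recl; congr (_ + _)%VS; apply: eq_bigr => i _; rewrite mxE. Qed.

Lemma dim_sp_tl r (u : 'rV[T]_r.+1) :
  \dim (sp u) = (\dim (sp (tl u)) + (u 0%R ord0 \notin sp (tl u)))%N.
Proof. by rewrite sp_tl dim_addl. Qed.

Lemma fiber r (u : 'rV[T]_r) (x : T) :
  (#|[set w : 'rV[F]_r | (\sum_k w 0%R k *: u 0%R k)%R == x]| * #|F| ^ \dim (sp u)
   = (x \in sp u) * #|F| ^ r)%N.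
Proof.
elim: r u x => [|r IH] u x.
  have -> : [set w : 'rV[F]_0 | (\sum_k w 0%R k *: u 0%R k)%R == x] = if x == 0 then setT else set0.
    by apply/setP => w; rewrite !inE big_ord0 eq_sym; case: (x == 0); rewrite !inE.
  rewrite /sp !big_ord0 dimv0 memv0 !expn0 !muln1.
  by case: (x == 0); rewrite ?cardsT ?cards0 ?card_mx.
pose u0 := u 0%R ord0; pose u' := tl u.
pose P := fun (c : F) (w' : 'rV[F]_r) => (\sum_k w' 0%R k *: u' 0%R k)%R == x - c *: u0.
have -> : [set w : 'rV[F]_r.+1 | (\sum_k w 0%R k *: u 0%R k)%R == x] =
          [set w : 'rV[F]_r.+1 | P (w 0%R ord0) (tl w)].
  apply/setP => w; rewrite !inE big_ord_recl /= /P.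
  have -> : (\sum_(k < r) tl w 0%R k *: u' 0%R k)%R = (\sum_(i < r) w 0%R (lift ord0 i) *: u 0%R (lift ord0 i))%R.
    by apply: eq_bigr => k _; rewrite !mxE.
  by rewrite /u0; apply/eqP/eqP => [<-|->]; [rewrite addrAC subrr add0r | rewrite addrC subrK].
rewrite (card_split P) sum_card_swap /P big_distrl /=.
rewrite dim_sp_tl -/u' sp_tl -/u0 -/u'.
case: (boolP (u0 \in sp u')) => u0U /=.
  have -> : (<[u0]> + sp u')%VS = sp u' by apply/addv_idPr; rewrite -memvE.
  rewrite addn0; under eq_bigr => c _ do rewrite IH.
  have Hc c : (x - c *: u0 \in sp u') = (x \in sp u').
    by rewrite rpredDr // memvN (memvZ _ u0U).
  under eq_bigr => c _ do rewrite Hc.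
  have cF : #|(fun _ : F => true)| = #|F| by apply: eq_card.
  by rewrite sum_nat_const cF expnS mulnCA.
rewrite addn1 expnS.
under eq_bigr => c _ do rewrite mulnCA IH mulnCA.
rewrite -big_distrl /= -expnS; congr (_ * _)%N.
case: (boolP (x \in (<[u0]> + sp u')%VS)) => [/memv_addP [y /vlineP [k ->] [z zU ->]] | nx].
  rewrite (bigD1 k) //= big1 ?addn0.
    by rewrite addrAC subrr add0r zU.
  move=> c ck; apply/eqP; rewrite eqb0.
  rewrite addrAC -scalerBl rpredDr // rpredZeq negb_or (negbTE u0U) andbT subr_eq0.
  by rewrite eq_sym.
rewrite big1 // => c _; apply/eqP; rewrite eqb0; apply: contra nx => H.
by rewrite -(subrK (c *: u0) x) addrC; apply: memv_add => //; apply: memvZ; apply: memv_line.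
Qed.

Local Notation q := #|F|.
Local Notation M := (\dim {: T}).

Lemma dim_sp_le r (u : 'rV[T]_r) : (\dim (sp u) <= r)%N.
Proof.
elim: r u => [|r IH] u; first by rewrite /sp big_ord0 dimv0.
rewrite dim_sp_tl; have := IH (tl u); case: (_ \notin _); lia.
Qed.

Lemma dim_sp_M r (u : 'rV[T]_r) : (\dim (sp u) <= M)%N.
Proof. exact/dimvS/subvf. Qed.

Lemma cardT_L : #|T| = (q ^ M)%N.
Proof. by rewrite -(@card_vspacef F T (Vector.class T)); exact: card_vspace. Qed.

Lemma q_gt0 : (0 < q)%N.
Proof. by apply/card_gt0P; exists 0. Qed.

Lemma card_t (U : {vspace T}) i :
  #|[set t : T | (\dim U + (t \notin U) == i)%N]| =
  (if \dim U == i then q ^ \dim U else if (\dim U).+1 == i then q ^ M - q ^ \dim U else 0)%N.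
Proof.
case: (eqVneq (\dim U) i) => [<-|ni].
  rewrite -card_vspace -cardsE; apply: eq_card => t; rewrite !inE.
  by case: (t \in U); rewrite ?addn0 ?addn1 ?eqxx // (gtn_eqF (ltnSn _)).
case: (eqVneq (\dim U).+1 i) => [<-|ni'].
  rewrite -cardT_L -card_vspace.
  have -> : [set t : T | (\dim U + (t \notin U) == (\dim U).+1)%N] = ~: [set t in U].
    by apply/setP => t; rewrite !inE; case: (t \in U); rewrite ?addn0 ?addn1 ?eqxx ?(ltn_eqF (ltnSn _)).
  by rewrite cardsCs setCK cardsE.
apply/eqP; rewrite cards_eq0; apply/eqP/setP => t; rewrite !inE.
by case: (t \in U); rewrite ?addn0 ?addn1 /= ?(negbTE ni) ?(negbTE ni').
Qed.

Definition Nc r i := #|[set u : 'rV[T]_r | \dim (sp u) == i]|.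

Lemma Nc_sum r i : (Nc r i)%:R = \sum_(w : 'rV[T]_r) ((\dim (sp w) == i)%:R : rat).
Proof.
rewrite /Nc -sum1_card natr_sum big_mkcond /=; apply: eq_bigr => w _.
by rewrite inE; case: (_ == _).
Qed.

Lemma Nc_rec r i : ((Nc r.+1 i)%:R : rat) =
  (q%:Q) ^+ i * (Nc r i)%:R + (if i is j.+1 then ((q%:Q) ^+ M - (q%:Q) ^+ j) * (Nc r j)%:R else 0).
Proof.
pose P := fun t (w : 'rV[T]_r) => (\dim (sp w) + (t \notin sp w) == i)%N.
have -> : Nc r.+1 i = #|[set u : 'rV[T]_r.+1 | P (u 0%R ord0) (tl u)]|.
  by rewrite /Nc; apply: eq_card => u; rewrite !inE dim_sp_tl.
have -> : (if i is j.+1 then ((q%:Q) ^+ M - (q%:Q) ^+ j) * (Nc r j)%:R else 0)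
   = \sum_(w : 'rV[T]_r) (if i is j.+1 then ((q%:Q) ^+ M - (q%:Q) ^+ j) * (\dim (sp w) == j)%:R else 0).
  by case: i {P} => [|j]; [rewrite big1 | rewrite Nc_sum big_distrr].
rewrite (card_split P) natr_sum Nc_sum big_distrr /=.
rewrite -big_split /=; apply: eq_bigr => w _; rewrite card_t.
have hd := dim_sp_M w.
case: (eqVneq (\dim (sp w)) i) => [<-|ni].
  rewrite mulr1 natrX; case: (\dim (sp w)) => [|d]; rewrite ?addr0 //.
  by rewrite (gtn_eqF (ltnSn _)) mulr0 addr0.
case: (eqVneq (\dim (sp w)).+1 i) => [<-|ni'].
  by rewrite mulr0 add0r eqxx mulr1 natrB ?natrX // leq_pexp2l // q_gt0.
rewrite mulr0 add0r; case: i {P} ni ni' => [|j] ni ni' //.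
by rewrite eqSS in ni'; rewrite (negbTE ni') mulr0.
Qed.
End Main.

Section Main2.
Variables (F : finFieldType) (L : fieldExtType F).
Local Notation T := (GF L).
Local Notation q := #|F|.
Local Notation M := (\dim {: T}).

Lemma mem_sp r (u : 'rV[T]_r) i : u 0%R i \in sp u.
Proof. by rewrite memvE; apply: (sumv_sup i) => //; rewrite -memvE memv_line. Qed.

Lemma dim_scale r (u : 'rV[T]_r) (a : T) : a != 0 ->
  \dim (sp (\row_i (a * u 0%R i))) = \dim (sp u).
Proof.
move=> a0.
have -> : sp (\row_i (a * u 0%R i)) = (amull a @: sp u)%VS.
  rewrite /sp limg_sum; apply: eq_bigr => i _; rewrite limg_line lfunE /= mxE //.
apply: limg_dim_eq; apply/eqP; rewrite -subv0; apply/subvP => y /memv_capP [_ ].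
rewrite memv_ker lfunE /= mulf_eq0 (negbTE a0) /= => /eqP ->; exact: mem0v.
Qed.

Lemma v0_neq0 r (v : 'rV[T]_r.+1) : \dim (sp v) = r.+1 -> v 0%R ord0 != 0.
Proof.
move=> hv; apply/negP => /eqP v0; move: hv; rewrite dim_sp_tl v0 mem0v addn0.
by have := dim_sp_le (tl v); lia.
Qed.

Definition shiftv r (v : 'rV[T]_r.+1) (x : 'rV[F]_r) : 'rV[T]_r :=
  \row_k (tl v 0%R k / v 0%R ord0 - (x 0%R k)%:A).

Lemma shift_full r (v : 'rV[T]_r.+1) (x : 'rV[F]_r) : \dim (sp v) = r.+1 ->
  \dim (sp (shiftv v x)) = r.
Proof.
move=> hv; have v0 := v0_neq0 hv.
set w := shiftv v x.
have h1 : (\dim (sp (cns (1%R : T) w)) <= \dim (sp w) + 1)%N.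
  by rewrite dim_sp_tl tl_cns leq_add2l leq_b1.
have h2 : (sp (\row_i ((v 0%R ord0)^-1 * v 0%R i))%R <= sp (cns (1%R : T) w))%VS.
  apply/subv_sumP => i _; rewrite -memvE mxE.
  case: (unliftP ord0 i) => [k ->|->].
    have -> : (v 0%R ord0)^-1 * v 0%R (lift ord0 k) = cns (1%R : T) w 0%R (lift ord0 k) + (x 0%R k) *: (cns (1%R : T) w 0%R ord0).
      rewrite cns0 /cns !mxE liftK /shiftv !mxE subrK mulrC.
      by [].
    by rewrite rpredD ?rpredZ ?mem_sp.
  by rewrite mulVf //; have := mem_sp (cns (1%R : T) w) ord0; rewrite cns0.
have := dimvS h2; rewrite dim_scale ?invr_eq0 // hv.
have := dim_sp_le w; lia.
Qed.

Definition gf r (v : 'rV[T]_r.+1) (w : 'rV[T]_r) : T :=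
  \sum_k w 0%R k * (tl v 0%R k / v 0%R ord0).
Definition Tc r (v : 'rV[T]_r) i := #|[set u in dual_line v | \dim (sp u) == i]|.

Lemma Tc_split r (v : 'rV[T]_r.+1) i : v 0%R ord0 != 0 ->
  Tc v i = (\sum_(w : 'rV[T]_r) (\dim (sp w) + (gf v w \notin sp w) == i))%N.
Proof.
move=> v0.
pose P := fun t (w : 'rV[T]_r) => (t == - gf v w) && (\dim (sp w) + (t \notin sp w) == i)%N.
have -> : Tc v i = #|[set u : 'rV[T]_r.+1 | P (u 0%R ord0) (tl u)]|.
  rewrite /Tc; apply: eq_card => u; rewrite !inE /P dim_sp_tl; congr (_ && _).
  rewrite big_ord_recl /gf.
  have -> : \sum_(k < r) tl u 0%R k * (tl v 0%R k / v 0%R ord0) =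
            (\sum_(i < r) u 0%R (lift ord0 i) * v 0%R (lift ord0 i)) / v 0%R ord0.
    by rewrite mulr_suml; apply: eq_bigr => k _; rewrite !mxE mulrA.
  set S := \sum_(i < r) _.
  apply/eqP/eqP => [H|->].
    by apply: (mulIf v0); rewrite mulNr divfK //; apply/eqP; rewrite -addr_eq0 H.
  by rewrite mulNr divfK // addNr.
rewrite (card_split P); apply: eq_bigr => w _.
rewrite /P; case: (boolP (\dim (sp w) + (gf v w \notin sp w) == i)%N) => H.
  rewrite (_ : [set t | _] = [set - gf v w]) ?cards1 //.
  by apply/setP => t; rewrite !inE; case: eqP => // ->; rewrite memvN H.
apply/eqP; rewrite cards_eq0; apply/eqP/setP => t; rewrite !inE.
by case: eqP => // ->; rewrite memvN (negbTE H).
Qed.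

Lemma key_count r (v : 'rV[T]_r.+1) j :
  (q ^ j * \sum_(x : 'rV[F]_r) Tc (shiftv v x) j =
   q ^ r * \sum_(w : 'rV[T]_r) ((\dim (sp w) == j) && (gf v w \in sp w)))%N.
Proof.
pose Pp := fun (x : 'rV[F]_r) (u : 'rV[T]_r) =>
  ((\sum_i u 0%R i * shiftv v x 0%R i)%R == 0) && (\dim (sp u) == j).
have -> : (\sum_(x : 'rV[F]_r) Tc (shiftv v x) j = \sum_x #|[set u | Pp x u]|)%N.
  by apply: eq_bigr => x _; rewrite /Tc; apply: eq_card => u; rewrite !inE.
rewrite sum_card_swap big_distrr big_distrr /=; apply: eq_bigr => u _.
case: (eqVneq (\dim (sp u)) j) => [ej|nj]; last first.
  rewrite andFb muln0; apply/eqP; rewrite muln_eq0 cards_eq0; apply/orP; right.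
  by apply/eqP/setP => x; rewrite !inE /Pp (negbTE nj) andbF.
rewrite andTb [RHS]mulnC -ej -(fiber u (gf v u)) mulnC; congr (_ * _)%N.
apply: eq_card => x; rewrite !inE /Pp ej eqxx andbT.
have -> : (\sum_i u 0%R i * shiftv v x 0%R i)%R = gf v u - (\sum_k x 0%R k *: u 0%R k)%R.
  rewrite /gf -sumrB; apply: eq_bigr => k _; rewrite /shiftv mxE mulrBr.
  by rewrite mulr_algr.
by rewrite subr_eq0 eq_sym.
Qed.

Lemma E_eq r (v : 'rV[T]_r.+1) j (c : rat) :
  (forall v' : 'rV[T]_r, \dim (sp v') = r -> (Tc v' j)%:R = c) ->
  \dim (sp v) = r.+1 ->
  \sum_(w : 'rV[T]_r) (((\dim (sp w) == j) && (gf v w \in sp w))%:R : rat) = (q%:Q) ^+ j * c.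
Proof.
move=> IH hv.
have := congr1 (fun n : nat => (n%:R : rat)) (key_count v j).
rewrite /= !natrM !natr_sum !natrX.
under eq_bigr => x _ do rewrite IH ?shift_full //.
rewrite sumr_const card_mx mul1n -[c *+ _]mulr_natr natrX => H.
apply: (mulfI (_ : (q%:Q) ^+ r != 0)); first by rewrite expf_neq0 // pnatr_eq0 -lt0n q_gt0.
by rewrite -H; ring.
Qed.

Definition Nf r i := coef (qpow q (hlin1 q) r) i (M%:Z).
Definition Df r i := coef (qpow q hlin2 r) i (M%:Z).
Definition Tf r i : rat := ((q%:Q) ^+ M)^-1 * (Nf r i + ((q%:Q) ^+ M - 1) * Df r i).

Lemma sum_rV0 (f : 'rV[T]_0 -> rat) c : (forall w, f w = c) -> \sum_w f w = c.
Proof.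
move=> H; under eq_bigr => w _ do rewrite H.
by rewrite sumr_const card_mx muln0 expn0.
Qed.

Lemma Nc_Nf r i : (Nc L r i)%:R = Nf r i.
Proof.
elim: r i => [|r IH] i.
  rewrite Nc_sum /Nf coef_qpow0; apply: sum_rV0 => w.
  by have := dim_sp_le w; rewrite leqn0 => /eqP ->; rewrite eq_sym.
rewrite Nc_rec /Nf Nf_rec ?q_gt0 // -exprnP -!/(Nf _ _) -!IH.
by case: i => // j; rewrite -/(Nf _ _) -IH.
Qed.

Lemma Tc_Tf r : forall v : 'rV[T]_r, \dim (sp v) = r -> forall i, (Tc v i)%:R = Tf r i.
Proof.
elim: r => [|r IH] v hv i.
  rewrite /Tc -sum1_card natr_sum big_mkcond /=.
  rewrite (@sum_rV0 _ ((0 == i)%:R)); last first.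
    move=> w; rewrite !inE big_ord0 eqxx /=.
    by have := dim_sp_le w; rewrite leqn0 => /eqP ->; case: (0 == i)%N.
  have q0 : (q%:Q) ^+ M != 0 by rewrite expf_neq0 // pnatr_eq0 -lt0n q_gt0.
  rewrite /Tf /Nf /Df !coef_qpow0 eq_sym; field.
  done.
have v0 := v0_neq0 hv.
have IHj j : forall v' : 'rV[T]_r, \dim (sp v') = r -> (Tc v' j)%:R = Tf r j.
  by move=> v' hv'; apply: IH.
have step : (Tc v i)%:R = (q%:Q) ^+ i * Tf r i
    + (if i is j.+1 then Nf r j - (q%:Q) ^+ j * Tf r j else 0).
  rewrite Tc_split // natr_sum -(E_eq (IHj i) hv).
  have -> : (if i is j.+1 then Nf r j - (q%:Q) ^+ j * Tf r j else 0) =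
     \sum_(w : 'rV[T]_r) (if i is j.+1 then ((\dim (sp w) == j)%:R - ((\dim (sp w) == j) && (gf v w \in sp w))%:R) else 0 : rat).
    case: i => [|j]; first by rewrite big1.
    by rewrite sumrB -Nc_Nf Nc_sum (E_eq (IHj j) hv).
  rewrite -big_split /=; apply: eq_bigr => w _.
  case: (gf v w \in sp w) => /=; rewrite ?addn0 ?addn1 ?andbT ?andbF ?add0r.
    by case: i => [|j]; rewrite ?addr0 // andbT subrr addr0.
  by case: i => [|j]; rewrite ?andbF ?subr0 ?eqSS.
rewrite step /Tf /Nf /Df Nf_rec ?q_gt0 // Df_rec -exprnP.
have q0 : (q%:Q) ^+ M != 0 by rewrite expf_neq0 // pnatr_eq0 -lt0n q_gt0.
by case: i {step} => [|j]; field.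
Qed.
End Main2.

Theorem proposition15 (F : finFieldType) (L : fieldExtType F) (m r : nat)
  (hm : \dim {: L} = m) (hr : (r <= m)%N) (v : 'rV[GF L]_r)
  (hv : rk v = r) :
  forall i : nat,
    ((rwe_coef (dual_line v) i)%:R : rat) =
      ((#|F|%:Q) ^ (m%:Z))^-1 *
        (coef (qpow #|F| (hlin1 #|F|) r) i m%:Z
         + ((#|F|%:Q) ^ (m%:Z) - 1) * coef (qpow #|F| hlin2 r) i m%:Z).
Proof.
move=> i.
have hM : \dim {: GF L} = m := hm.
have hv' : \dim (sp v) = r by rewrite -rkE.
have -> : rwe_coef (dual_line v) i = Tc v i.
  by rewrite /rwe_coef /Tc; apply: eq_card => u; rewrite !inE rkE.
rewrite (Tc_Tf hv') /Tf /Nf /Df hM.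
by rewrite -exprnP.
Qed.
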